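(* Let $d=(d_1,\dots,d_n)$ be a weak composition, and let $\gamma=\gamma(d)$, $\mu=\mu(d)$. If $c_\beta\in\mathbb{Z}$ for the (finitely many) weak compositions $\beta$ with $x^\beta\prec x^\gamma$ appearing, then \[ m_\mu\cdot\Big(x^\gamma+\sum_{\beta\prec\gamma}c_\beta x^\beta\Big)=x^d+\sum_{x^e<_{ts}x^d}b_ex^e,\qquad b_e\in\mathbb{Z}. \]
   Context: For a weak composition $d$ of length $n$, $x^d=x_1^{d_1}\cdots x_n^{d_n}$ and $\lambda(d)$ is its weakly decreasing rearrangement. $x^\beta\prec x^e$ (also written $\beta\prec e$) means $\lambda(\beta)<_L\lambda(e)$ in lexicographic order; $x^d<_{ts}x^e$ means either $\lambda(d)<_L\lambda(e)$, or $\lambda(d)=\lambda(e)$ and $d<_Le$. The permutation $\sigma(d)$ labels the entries $d_1,\dots,d_n$ by $1,\dots,n$ from largest to smallest, ties broken left to right. The weak composition $\gamma(d)$: assign value $0$ to the position carrying label $n$; recursively, if the position carrying label $t$ has been assigned value $s$, assign to the position carrying label $t-1$ the value $s$ if that position is to the left of the position of $t$, and $s+1$ otherwise; $\gamma(d)_i$ is the value assigned to position $i$. Then $\mu(d)=d-\gamma(d)$ (componentwise). For example $d=(3,1,3,0,2,0)$ gives $\sigma(d)=(1,4,2,5,3,6)$, $\gamma(d)=(1,0,1,0,1,0)$, $\mu(d)=(2,1,2,0,1,0)$. $m_\mu$ is the sum of all distinct monomials in the $\mathfrak S_n$-orbit of $x^\mu$. *)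

(* Defs.v *)
From mathcomp Require Import all_boot all_order all_algebra all_fingroup.
From mathcomp Require Import mpoly.
Set Implicit Arguments. Unset Strict Implicit. Unset Printing Implicit Defensive.
Import GRing.Theory.

(* Weak compositions of length n are the monomial exponents 'X_{1..n};
   x^d is 'X_[d] in {mpoly int[n]}. Positions are 0-indexed. *)

Definition lam (n : nat) (d : 'X_{1..n}) : seq nat := sort geq (tval (multinom_val d)).

Fixpoint lexlt (s t : seq nat) : bool :=
  match s, t with
  | x :: s', y :: t' => (x < y) || ((x == y) && lexlt s' t')
  | [::], _ :: _ => true
  | _, _ => false
  end.

Definition prec (n : nat) (b e : 'X_{1..n}) : bool := lexlt (lam b) (lam e).

Definition lt_ts (n : nat) (d e : 'X_{1..n}) : bool :=
  lexlt (lam d) (lam e) || ((lam d == lam e) && lexlt (tval (multinom_val d)) (tval (multinom_val e))).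

(* positions listed by increasing label: largest entry first, ties left to right.
   The k-th element (0-indexed) is the position carrying label k+1 in sigma(d). *)
Definition label_order (n : nat) (d : 'X_{1..n}) : seq nat :=
  sort (fun i j : nat => let ds := tval (multinom_val d) in
          (nth 0 ds j < nth 0 ds i)%N || ((nth 0 ds i == nth 0 ds j) && (i <= j)%N)) (iota 0 n).

(* gamma(d)_i: with k the (0-indexed) label of position i, the number of
   t in [k, n-1) with pos(t) > pos(t+1) (i.e. the number of "+1" steps in the
   recursive assignment from label n down to label k+1). *)
Definition gamma_at (n : nat) (d : 'X_{1..n}) (i : nat) : nat :=
  let ps := label_order d in
  let k := index i ps in
  count (fun j => nth 0 ps j.+1 < nth 0 ps j)%N (iota k (n.-1 - k)).

Definition gamma (n : nat) (d : 'X_{1..n}) : 'X_{1..n} :=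
  [multinom gamma_at d i | i < n].

Definition mu (n : nat) (d : 'X_{1..n}) : 'X_{1..n} :=
  [multinom (d i - gamma d i)%N | i < n].

Definition mperm (n : nat) (s : 'S_n) (m : 'X_{1..n}) : 'X_{1..n} :=
  [multinom m (s i) | i < n].

Definition msymm (n : nat) (m : 'X_{1..n}) : {mpoly int[n]} :=
  \sum_(e <- undup [seq mperm s m | s : 'S_n]) 'X_[e].

(* Main.v *)
Require Import Defs.
From mathcomp Require Import all_boot all_order all_algebra all_fingroup.
From mathcomp Require Import mpoly.
From mathcomp Require Import zify.
Set Implicit Arguments. Unset Strict Implicit. Unset Printing Implicit Defensive.

Definition Psum (k : nat) (s : seq nat) := sumn (take k s).

Lemma Psum0 s : Psum 0 s = 0. Proof. by case: s. Qed.
Lemma PsumS k a s : Psum k.+1 (a :: s) = a + Psum k s. Proof. by []. Qed.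

Lemma lexlt_irr s : lexlt s s = false.
Proof. by elim: s => //= a s ->; rewrite ltnn eqxx. Qed.

Lemma lex_dom_strict x y i : size x = size y ->
  (forall k, k <= i -> Psum k x <= Psum k y) -> Psum i.+1 x < Psum i.+1 y -> lexlt x y.
Proof.
elim: x y i => [|a x IH] [|b y] i //=.
- move=> [] Hs Hle Hlt.
  have H1 : a <= b.
    case: i Hle Hlt => [|i] Hle Hlt; first by move: Hlt; rewrite !PsumS !Psum0; lia.
    by have := Hle 1 isT; rewrite !PsumS !Psum0; lia.
  case: (ltngtP a b) H1 => // Hab _; subst b.
  case: i Hle Hlt => [|i] Hle Hlt; first by move: Hlt; rewrite !PsumS !Psum0; lia.
  rewrite ?eqxx ?ltnn /=; apply: (IH y i Hs).
  + by move=> k Hk; have := Hle k.+1 Hk; rewrite !PsumS; lia.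
  + by move: Hlt; rewrite !PsumS; lia.
Qed.

Lemma lex_dom_neq x y : size x = size y ->
  (forall k, k <= size x -> Psum k x <= Psum k y) -> x != y -> lexlt x y.
Proof.
elim: x y => [|a x IH] [|b y] //= [] Hs Hle Hne.
have H1 : a <= b by have := Hle 1 isT; rewrite !PsumS !Psum0; lia.
case: (ltngtP a b) H1 => // Hab _; subst b.
rewrite ?eqxx ?ltnn /=; apply: (IH y Hs).
- by move=> k Hk; have := Hle k.+1 Hk; rewrite !PsumS; lia.
- by move: Hne; rewrite eqseq_cons eqxx.
Qed.

Lemma lexlt_first x y : size x = size y -> lexlt x y ->
  exists i, [/\ i < size x, (forall k, k <= i -> Psum k x = Psum k y) &
               Psum i.+1 x < Psum i.+1 y].
Proof.
elim: x y => [|a x IH] [|b y] //= [] Hs /orP[Hab|/andP[/eqP Hab Hl]].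
- exists 0; split => //; first by move=> k; rewrite leqn0 => /eqP->; rewrite !Psum0.
  by rewrite !PsumS !Psum0; lia.
- subst b; have [i [Hi Heq Hlt]] := IH y Hs Hl.
  exists i.+1; split => //.
  + by move=> [|k] Hk; rewrite ?Psum0 // !PsumS Heq.
  + by rewrite !PsumS; lia.
Qed.

Lemma lexlt_nth x y i : size x = size y -> i < size x ->
  (forall j, j < i -> nth 0 x j = nth 0 y j) -> nth 0 x i < nth 0 y i -> lexlt x y.
Proof.
elim: x y i => [|a x IH] [|b y] i //= [] Hs Hi Heq Hlt.
case: i Hi Heq Hlt => [|i] Hi Heq Hlt /=; first by rewrite Hlt.
have := Heq 0 isT => /= ->; rewrite ltnn eqxx /=.
by apply: (IH y i Hs Hi) => // j Hj; apply: (Heq j.+1).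
Qed.

Section Topk.
Variable n : nat.
Implicit Types (x y : 'I_n -> nat) (J K : {set 'I_n}).

Definition topk k x := \max_(J : {set 'I_n} | #|J| == k) \sum_(j in J) x j.

Lemma topk_ge J x : \sum_(j in J) x j <= topk #|J| x.
Proof. by rewrite /topk (bigD1 J) ?eqxx //= leq_maxl. Qed.

Lemma topset_of_max J x : \sum_(j in J) x j = topk #|J| x ->
  forall j j', j \in J -> j' \notin J -> x j' <= x j.
Proof.
move=> Hmax j j' Hj Hj'; rewrite leqNgt; apply/negP => Hlt.
set K := j' |: (J :\ j).
have Hj'K : j' \notin J :\ j by rewrite !inE negb_and Hj' orbT.
have HK : #|K| = #|J| by rewrite cardsU1 Hj'K (cardsD1 j J) Hj.
have := topk_ge K x; rewrite HK -Hmax /K big_setU1 //= (big_setD1 j Hj) /=.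
lia.
Qed.

Lemma max_of_topset J x : (forall j j', j \in J -> j' \notin J -> x j' <= x j) ->
  \sum_(j in J) x j = topk #|J| x.
Proof.
move=> Htop; apply/eqP; rewrite eqn_leq topk_ge ?andbT.
apply/bigmax_leqP => K /eqP HK.
rewrite (big_setID J) [X in _ <= X](big_setID K) /= setIC leq_add2l.
set M := \max_(i in K :\: J) x i.
apply: (@leq_trans (\sum_(i in K :\: J) M)); first by apply: leq_sum => i Hi; exact: leq_bigmax_cond.
apply: (@leq_trans (\sum_(i in J :\: K) M)); last first.
  apply: leq_sum => i Hi; apply/bigmax_leqP => i' Hi'.
  move: Hi Hi'; rewrite !inE => /andP[Hi1 Hi2] /andP[Hi'1 Hi'2].
  by apply: Htop.
rewrite !sum_nat_const; apply: leq_mul => //.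
have h1 := cardsID J K; have h2 := cardsID K J.
by rewrite setIC in h2; lia.
Qed.

Lemma topk_sub k x y : topk k (fun i => x i + y i) <= topk k x + topk k y.
Proof.
apply/bigmax_leqP => J /eqP HJ; rewrite big_split /= -HJ.
by apply: leq_add; apply: topk_ge.
Qed.

Lemma topk_ext k x y : x =1 y -> topk k x = topk k y.
Proof. by move=> E; apply: eq_bigr => J _; apply: eq_bigr => j _. Qed.

Lemma topk_perm_le k x (s : 'S_n) : topk k (fun i => x (s i)) <= topk k x.
Proof.
apply/bigmax_leqP => J /eqP HJ.
have -> : \sum_(j in J) x (s j) = \sum_(j in s @: J) x j.
  by rewrite big_imset //= => a b _ _; apply: perm_inj.
have <- : #|s @: J| = k by rewrite card_imset //; exact: perm_inj.
exact: topk_ge.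
Qed.

Lemma topk_perm k x (s : 'S_n) : topk k (fun i => x (s i)) = topk k x.
Proof.
apply/eqP; rewrite eqn_leq topk_perm_le /=.
have := topk_perm_le k (fun i => x (s i)) (s^-1)%g.
by rewrite (@topk_ext k _ x) // => i; rewrite permKV.
Qed.

End Topk.

Section C.
Variable n : nat.

Lemma TSL (R : rel 'I_n) : total R -> transitive R -> forall k, k <= n ->
  #|[set j in take k (sort R (enum 'I_n))]| = k /\
  (forall j j', j \in take k (sort R (enum 'I_n)) -> j' \notin take k (sort R (enum 'I_n)) -> R j j').
Proof.
move=> Rt Rtr k Hk; set I := sort R (enum 'I_n).
have uI : uniq I by rewrite sort_uniq enum_uniq.
have sI : size I = n by rewrite size_sort size_enum_ord.
split.
  rewrite cardsE; move/card_uniqP: (take_uniq k uI) => ->.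
  by rewrite size_takel // sI.
move=> j j' Hj Hj'.
have Hj'd : j' \in drop k I.
  have : j' \in I by rewrite /I mem_sort mem_enum.
  by rewrite -{1}(cat_take_drop k I) mem_cat (negbTE Hj').
have : pairwise R I by rewrite -sorted_pairwise // sort_sorted.
rewrite -(cat_take_drop k I) pairwise_cat => /and3P[/allrelP H _ _].
exact: H.
Qed.

Lemma tval_map (x : 'X_{1..n}) : tval (multinom_val x) = map (fun i => x i) (enum 'I_n).
Proof. by rewrite -[LHS]map_tnth_enum. Qed.

Lemma Psum_lam (x : 'X_{1..n}) k : k <= n -> Psum k (lam x) = topk k (fun i => x i).
Proof.
move=> Hk; rewrite /lam tval_map sort_map.
set R := relpre (fun i => x i) geq.
have Rt : total R by move=> a b; rewrite /R /= leq_total.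
have Rtr : transitive R by move=> a b c; rewrite /R /= => H1 H2; apply: leq_trans H2 H1.
have [HJ Htop] := TSL Rt Rtr Hk.
rewrite /Psum -map_take sumnE big_map big_uniq; last first.
  by apply: take_uniq; rewrite sort_uniq enum_uniq.
have -> : topk k (fun i => x i) = topk #|[set j in take k (sort R (enum 'I_n))]| (fun i => x i) by rewrite HJ.
rewrite -max_of_topset.
  by apply: eq_bigl => i; rewrite inE.
by move=> j j'; rewrite !inE => H1 H2; apply: (Htop j j' H1 H2).
Qed.

End C.

Section E.
Variable n : nat.
Variable d : 'X_{1..n}.

Let ds := tval (multinom_val d).
Definition rr := (fun i j : nat => let ds := tval (multinom_val d) in
          (nth 0 ds j < nth 0 ds i)%N || ((nth 0 ds i == nth 0 ds j) && (i <= j)%N)).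
Definition ps := label_order d.
Lemma psE : ps = sort rr (iota 0 n). Proof. by []. Qed.

Lemma rr_total : total rr.
Proof. move=> i j; rewrite /rr /=; case: (ltngtP (nth 0 ds i) (nth 0 ds j)) => //= _; rewrite ?eqxx /= ?orbT //; exact: leq_total. Qed.
Lemma rr_trans : transitive rr.
Proof.
move=> j i k; rewrite /rr /= => /orP[H1|/andP[/eqP H1 H2]] /orP[H3|/andP[/eqP H3 H4]]; lia.
Qed.
Lemma rr_refl : reflexive rr.
Proof. by move=> i; rewrite /rr /= eqxx leqnn orbT. Qed.
Lemma rr_anti i j : rr i j -> rr j i -> i = j.
Proof.
rewrite /rr /= => /orP[H1|/andP[/eqP H1 H2]] /orP[H3|/andP[/eqP H3 H4]]; lia.
Qed.

Lemma ps_size : size ps = n. Proof. by rewrite psE size_sort size_iota. Qed.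
Lemma ps_uniq : uniq ps. Proof. by rewrite psE sort_uniq iota_uniq. Qed.
Lemma ps_mem i : (i \in ps) = (i < n). Proof. by rewrite psE mem_sort mem_iota. Qed.
Lemma ps_sorted : sorted rr ps. Proof. rewrite psE. exact: (sort_sorted rr_total (iota 0 n)). Qed.

Lemma ps_rr k k' : k <= k' -> k' < n -> rr (nth 0 ps k) (nth 0 ps k').
Proof.
move=> H1 H2; apply: (sorted_leq_nth rr_trans rr_refl 0 ps_sorted) => //; rewrite inE /= ps_size //.
exact: leq_ltn_trans H2.
Qed.

Lemma ps_nth_lt k : k < n -> nth 0 ps k < n.
Proof. by move=> Hk; rewrite -ps_mem mem_nth // ps_size. Qed.

Definition Dk k := nth 0 ds (nth 0 ps k).
Definition des t := nth 0 ps t.+1 < nth 0 ps t.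
Definition Gk k := count des (iota k (n.-1 - k)).

Lemma D_step k : k.+1 < n -> Dk k.+1 <= Dk k /\ (des k -> Dk k.+1 < Dk k).
Proof.
move=> Hk; have := ps_rr (leqnSn k) Hk; rewrite /rr /= /Dk /des -/ds.
move=> /orP[H|/andP[/eqP H1 H2]]; first by split => //; apply: ltnW.
by split; [rewrite H1|lia].
Qed.

Lemma G_split k m : k + m <= n.-1 -> Gk k = count des (iota k m) + Gk (k + m).
Proof.
move=> Hkm.
rewrite /Gk -count_cat -iotaD; congr (count _ (iota _ _)); lia.
Qed.

Lemma G_step k : k.+1 < n -> Gk k = des k + Gk k.+1.
Proof. by move=> Hk; rewrite (@G_split k 1) ?addn1 /= ?addn0 //; lia. Qed.

Lemma G_last : Gk n.-1 = 0. Proof. by rewrite /Gk subnn. Qed.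

Lemma G_le_D k : k < n -> Gk k <= Dk k.
Proof.
move=> Hk; move Hm : (n.-1 - k) => m; elim: m k Hk Hm => [|m IH] k Hk Hm.
  have Hkn : k = n.-1 by lia.
  by rewrite Hkn G_last.
have Hk1 : k.+1 < n by lia.
rewrite G_step //; have [H1 H2] := D_step Hk1; have := IH k.+1 Hk1 ltac:(lia).
by case: (des k) H2 => /= [H2|_]; [have := H2 isT|]; lia.
Qed.

Lemma GD_step k : k.+1 < n -> Gk k.+1 <= Gk k /\ Dk k.+1 - Gk k.+1 <= Dk k - Gk k.
Proof.
move=> Hk; rewrite (G_step Hk); have [H1 H2] := D_step Hk.
have H3 := G_le_D Hk.
by case: (des k) H2 H3 => /= [H2|_]; [have := H2 isT|]; lia.
Qed.

Lemma GD_mono k k' : k <= k' -> k' < n -> Gk k' <= Gk k /\ Dk k' - Gk k' <= Dk k - Gk k.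
Proof.
move=> Hkk'; rewrite -(subnKC Hkk'); elim: (k' - k) => [|m IH] Hm; first by rewrite addn0.
have [H1 H2] := IH ltac:(lia); have [H3 H4] := GD_step (k := k + m) ltac:(lia).
rewrite addnS; lia.
Qed.

Lemma G_eq_pos k k' : k < k' -> k' < n -> Gk k = Gk k' -> nth 0 ps k < nth 0 ps k'.
Proof.
move=> Hkk' Hk' Heq.
have Hc : count des (iota k (k' - k)) = 0.
  move: Heq; rewrite (@G_split k (k' - k)) ?subnKC //; try lia.
have Hall : forall t, k <= t < k' -> nth 0 ps t <= nth 0 ps t.+1.
  move=> t Ht; have : t \in iota k (k' - k) by rewrite mem_iota; lia.
  move/eqP: Hc; rewrite -leqn0 leqNgt -has_count => /hasPn H /H.
  by rewrite /des -leqNgt.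
have Hle : nth 0 ps k <= nth 0 ps k'.
  have : forall m, k + m <= k' -> nth 0 ps k <= nth 0 ps (k + m).
    elim=> [|m IH] Hm; first by rewrite addn0.
    apply: leq_trans (IH ltac:(lia)) _; rewrite addnS; apply: Hall; lia.
  by move=> /(_ (k' - k)); rewrite subnKC; [apply|apply: ltnW].
rewrite ltn_neqAle Hle andbT; apply/negP => /eqP H.
have := ps_uniq; move/uniqP => /(_ 0 k k'); rewrite !inE ps_size => /(_ ltac:(lia) Hk' H).
lia.
Qed.

Definition lab (i : 'I_n) := index (val i) ps.
Lemma lab_lt i : lab i < n.
Proof. by rewrite /lab -[X in _ < X]ps_size index_mem ps_mem ltn_ord. Qed.
Lemma nth_lab i : nth 0 ps (lab i) = i.
Proof. by rewrite /lab nth_index // ps_mem ltn_ord. Qed.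
Lemma D_lab i : Dk (lab i) = d i.
Proof. by rewrite /Dk nth_lab (mnm_nth 0). Qed.
Lemma gamma_lab i : gamma d i = Gk (lab i).
Proof. by rewrite /gamma mnmE. Qed.
Lemma mu_lab i : mu d i = Dk (lab i) - Gk (lab i).
Proof. by rewrite /mu mnmE D_lab gamma_lab. Qed.

Lemma gamma_le i : gamma d i <= d i.
Proof. by rewrite gamma_lab -D_lab; apply: G_le_D; apply: lab_lt. Qed.

Lemma lab_mono (j j' : 'I_n) : lab j <= lab j' -> gamma d j' <= gamma d j /\ mu d j' <= mu d j.
Proof. by move=> H; rewrite !gamma_lab !mu_lab; apply: GD_mono => //; apply: lab_lt. Qed.

Lemma lab_inj (j j' : 'I_n) : lab j = lab j' -> j = j'.
Proof. by move=> H; apply: val_inj => /=; rewrite -(nth_lab j) -(nth_lab j') H. Qed.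

Lemma rr_lab (j j' : 'I_n) : rr j j' -> j != j' -> lab j < lab j'.
Proof.
move=> H Hne; rewrite ltnNge; apply/negP => Hle.
have := ps_rr Hle (lab_lt j); rewrite !nth_lab => H'.
by move/negP: Hne; apply; apply/eqP/val_inj/rr_anti.
Qed.

Lemma d_lab (j j' : 'I_n) : d j' < d j -> lab j < lab j'.
Proof.
move=> H; apply: rr_lab.
  by rewrite /rr /= -!(mnm_nth 0) H.
by apply/eqP => E; rewrite E ltnn in H.
Qed.

Lemma gamma_eq_pos (i j : 'I_n) : gamma d i = gamma d j -> (i < j)%N -> d j <= d i.
Proof.
move=> Hg Hij.
have Hl : lab i < lab j.
  rewrite ltnNge leq_eqVlt; apply/negP => /orP[/eqP E|H].
    by have := lab_inj E => E'; rewrite E' ltnn in Hij.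
  have := G_eq_pos H (lab_lt i); rewrite -!gamma_lab Hg !nth_lab => /(_ erefl).
  by rewrite ltnNge (ltnW Hij).
have := ps_rr (ltnW Hl) (lab_lt j); rewrite !nth_lab /rr /= -!(mnm_nth 0).
move=> /orP[H|/andP[/eqP H _]]; [exact: ltnW|by rewrite H].
Qed.

End E.

Section G.
Variable n : nat.
Variable d : 'X_{1..n}.

Lemma mu_gamma i : mu d i + gamma d i = d i.
Proof. by have := gamma_le d i; rewrite /mu mnmE; lia. Qed.

Lemma topk_d k : k <= n ->
  topk k (fun i => d i) = topk k (fun i => mu d i) + topk k (fun i => gamma d i).
Proof.
move=> Hk; set R := fun i j : 'I_n => rr d i j.
have Rt : total R by move=> i j; apply: rr_total.
have Rtr : transitive R by move=> i j l; apply: rr_trans.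
have [HJ Htop] := TSL Rt Rtr Hk.
set J := [set j in take k (sort R (enum 'I_n))] in HJ.
have Hl : forall j j', j \in J -> j' \notin J -> lab d j < lab d j'.
  move=> j j'; rewrite !inE => H1 H2; apply: rr_lab; first exact: Htop.
  by apply/eqP => E; move: H2; rewrite -E H1.
have Hmu : \sum_(j in J) mu d j = topk k (fun i => mu d i).
  rewrite -HJ; apply: max_of_topset => j j' H1 H2; exact: (lab_mono (ltnW (Hl _ _ H1 H2))).2.
have Hga : \sum_(j in J) gamma d j = topk k (fun i => gamma d i).
  rewrite -HJ; apply: max_of_topset => j j' H1 H2; exact: (lab_mono (ltnW (Hl _ _ H1 H2))).1.
apply/eqP; rewrite eqn_leq; apply/andP; split.
  rewrite (@topk_ext _ k _ (fun i => mu d i + gamma d i)); last by move=> i; rewrite mu_gamma.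
  exact: topk_sub.
rewrite -Hmu -Hga -big_split /=; under eq_bigr do rewrite mu_gamma.
by rewrite -[in X in _ <= X]HJ; apply: topk_ge.
Qed.

Lemma size_lam (x : 'X_{1..n}) : size (lam x) = n.
Proof. by rewrite /lam size_sort size_tuple. Qed.

Lemma Fd k : k <= n ->
  Psum k (lam d) = topk k (fun i => mu d i) + Psum k (lam (gamma d)).
Proof. by move=> Hk; rewrite !Psum_lam // topk_d. Qed.

Lemma Fc (s : 'S_n) (b : 'X_{1..n}) k : k <= n ->
  Psum k (lam (mperm s (mu d) + b)%MM) <= topk k (fun i => mu d i) + Psum k (lam b).
Proof.
move=> Hk; rewrite !Psum_lam //.
rewrite (@topk_ext _ k _ (fun i => mu d (s i) + b i)); last by move=> i; rewrite mnmDE mnmE.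
apply: leq_trans (topk_sub _ _ _) _.
by rewrite (topk_perm k (fun i => mu d i)).
Qed.

Lemma transfer (c e : 'X_{1..n}) (P : pred nat) (F : nat -> nat) :
  perm_eq (tval (multinom_val c)) (tval (multinom_val e)) ->
  \sum_(j | P (c j)) F (c j) = \sum_(j | P (e j)) F (e j).
Proof.
move=> Hp.
have E : forall x : 'X_{1..n}, \sum_(j | P (x j)) F (x j) = \sum_(y <- tval (multinom_val x) | P y) F y.
  move=> x; rewrite tval_map big_map big_enum_cond.
  by apply: eq_bigl => j.
by rewrite !E; apply: perm_big.
Qed.

Lemma top_count (x : 'I_n -> nat) (K : {set 'I_n}) t :
  (forall j j', j \in K -> j' \notin K -> x j' <= x j) ->
  #|K :&: [set j | t <= x j]| = minn #|K| #|[set j | t <= x j]|.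
Proof.
move=> Htop; set G := [set j | t <= x j].
case: (boolP (G \subset K)) => HGK.
  rewrite (setIidPr HGK) (minn_idPr _) //; exact: subset_leq_card.
have HKG : K \subset G.
  have [j' Hj'G Hj'K] := subsetPn HGK.
  apply/subsetP => j Hj; move: Hj'G; rewrite !inE => Ht.
  exact: leq_trans Ht (Htop _ _ Hj Hj'K).
rewrite (setIidPl HKG) (minn_idPl _) //; exact: subset_leq_card.
Qed.

Lemma count_eq (x : 'I_n -> nat) (K : {set 'I_n}) g :
  #|K :&: [set j | x j == g]| = #|K :&: [set j | g <= x j]| - #|K :&: [set j | g.+1 <= x j]|.
Proof.
have := cardsID [set j | g.+1 <= x j] (K :&: [set j | g <= x j]).
have -> : K :&: [set j | g <= x j] :&: [set j | g.+1 <= x j] = K :&: [set j | g.+1 <= x j].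
  by apply/setP => j; rewrite !inE -andbA; case: (j \in K) => //=; case: (ltngtP g (x j)).
have -> : K :&: [set j | g <= x j] :\: [set j | g.+1 <= x j] = K :&: [set j | x j == g].
  by apply/setP => j; rewrite !inE; case: (j \in K); rewrite ?andbF //=; case: (ltngtP g (x j)).
by move=> <-; rewrite addKn.
Qed.

End G.

Section H.
Variable n : nat.
Variable d : 'X_{1..n}.

Lemma EQ (s : 'S_n) : let c := (mperm s (mu d) + gamma d)%MM in
  lam c = lam d -> c = d \/ lexlt (tval (multinom_val c)) (tval (multinom_val d)).
Proof.
move=> c Hlam.
have Hp : perm_eq (tval (multinom_val c)) (tval (multinom_val d)).
  apply: (@perm_trans _ (lam c)); first by rewrite perm_sym /lam perm_sort.
  by rewrite Hlam /lam perm_sort.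
have cE : forall j, c j = mu d (s j) + gamma d j by move=> j; rewrite mnmDE mnmE.
case: (boolP (c == d)) => [/eqP|Hne]; first by left.
right.
have [i0 Hi0] : exists i0, c i0 != d i0.
  apply/existsP; apply: contraR Hne; rewrite negb_exists => /forallP H.
  by apply/eqP/mnmP => j; have := H j; rewrite negbK => /eqP.
case: (@arg_minnP _ i0 (fun j => c j != d j) (fun i : 'I_n => val i) Hi0) => i Hi Hmin.
have Hbef : forall j : 'I_n, (j < i)%N -> c j = d j.
  move=> j Hj; apply/eqP; apply: contraTT Hj => Hj; rewrite -leqNgt; exact: Hmin.
case: (ltngtP (c i) (d i)) Hi => // Hlt _.
  apply: (@lexlt_nth _ _ i); rewrite ?size_tuple //.
    move=> j Hj; have Hjn : j < n by apply: ltn_trans Hj (ltn_ord i).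
    by rewrite -!(mnm_nth 0 _ (Ordinal Hjn)); apply: Hbef.
  by rewrite -!(mnm_nth 0).
exfalso.
set v := c i.
set J := [set j | v <= c j]; set J' := [set j | v <= d j].
have HJ : #|J| = #|J'|.
  rewrite -!sum1_card.
  have E := transfer (fun y => v <= y) (fun _ => 1) Hp.
  transitivity (\sum_(j | v <= c j) 1); first by apply: eq_bigl => j; rewrite inE.
  by rewrite E; apply: eq_bigl => j; rewrite inE.
have HS : \sum_(j in J) c j = \sum_(j in J') d j.
  have E := transfer (fun y => v <= y) id Hp.
  transitivity (\sum_(j | v <= c j) c j); first by apply: eq_bigl => j; rewrite inE.
  by rewrite E; apply: eq_bigl => j; rewrite inE.
set m := #|J|.
have HJ'top : forall j j', j \in J' -> j' \notin J' -> lab d j <= lab d j'.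
  move=> j j'; rewrite !inE -ltnNge => H1 H2; apply: ltnW; apply: d_lab; exact: leq_trans H2 H1.
have Hmu' : \sum_(j in J') mu d j = topk m (fun j => mu d j).
  rewrite /m HJ; apply: max_of_topset => j j' H1 H2; exact: (lab_mono (HJ'top _ _ H1 H2)).2.
have Hga' : \sum_(j in J') gamma d j = topk m (fun j => gamma d j).
  rewrite /m HJ; apply: max_of_topset => j j' H1 H2; exact: (lab_mono (HJ'top _ _ H1 H2)).1.
have Hd' : \sum_(j in J') d j = \sum_(j in J') mu d j + \sum_(j in J') gamma d j.
  by rewrite -big_split /=; apply: eq_bigr => j _; rewrite mu_gamma.
have Hc' : \sum_(j in J) c j = \sum_(j in J) mu d (s j) + \sum_(j in J) gamma d j.
  by rewrite -big_split /=; apply: eq_bigr => j _; rewrite cE.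
have H1 : \sum_(j in J) mu d (s j) <= topk m (fun j => mu d j).
  rewrite -(topk_perm m (fun j => mu d j) s); exact: topk_ge.
have H2 : \sum_(j in J) gamma d j <= topk m (fun j => gamma d j) by exact: topk_ge.
have HgJ : \sum_(j in J) gamma d j = topk #|J| (fun j => gamma d j).
  rewrite -/m; move: H1 H2 Hmu' Hga' Hd' Hc' HS.
  move: (\sum_(j in J) gamma d j) (\sum_(j in J) mu d (s j)) (\sum_(j in J) c j) (\sum_(j in J') d j) (\sum_(j in J') mu d j) (\sum_(j in J') gamma d j) (topk m [eta mu d]) (topk m [eta gamma d]).
  move=> a1 a2 a3 a4 a5 a6 a7 a8; lia.
have HJtop := topset_of_max HgJ.
have HJ'top2 : forall j j', j \in J' -> j' \notin J' -> gamma d j' <= gamma d j.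
  by move=> j j' Hj Hj'; exact: (lab_mono (HJ'top _ _ Hj Hj')).1.
set g := gamma d i.
have Ecnt : #|J :&: [set j | gamma d j == g]| = #|J' :&: [set j | gamma d j == g]|.
  by rewrite (count_eq (fun j => gamma d j) J) (count_eq (fun j => gamma d j) J') (top_count g HJtop) (top_count g HJ'top2) (top_count g.+1 HJtop) (top_count g.+1 HJ'top2) HJ.
have Hprop : J' :&: [set j | gamma d j == g] \proper J :&: [set j | gamma d j == g].
  apply/properP; split.
    apply/subsetP => j; rewrite !inE => /andP[Hj /eqP Hg]; rewrite Hg eqxx andbT.
    have Hdj : d i < d j by apply: leq_trans Hj; rewrite /v.
    case: (ltngtP (val j) (val i)) => Hji.
    - by rewrite (Hbef j Hji); exact: Hj.
    - have H := gamma_eq_pos (esym Hg) Hji.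
      by rewrite leqNgt Hdj in H.
    - have E : j = i by apply: val_inj.
      by rewrite E ltnn in Hdj.
  exists i; rewrite !inE ?leqnn ?eqxx //= -/v andbT -ltnNge.
  exact: Hlt.
by have := proper_card Hprop; rewrite Ecnt ltnn.
Qed.

End H.

Section I.
Variable n : nat.
Variable d : 'X_{1..n}.

Lemma CM (s : 'S_n) (b : 'X_{1..n}) : (b = gamma d \/ prec b (gamma d)) ->
  ((mperm s (mu d) + b)%MM = d -> mperm s (mu d) = mu d /\ b = gamma d) /\
  ((mperm s (mu d) + b)%MM != d -> lt_ts (mperm s (mu d) + b)%MM d).
Proof.
set c := (mperm s (mu d) + b)%MM.
have Hsz : forall x : 'X_{1..n}, size (lam x) = n by move=> x; apply: size_lam.
case=> [Hb|Hpr].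
- subst b.
  case: (boolP (lam c == lam d)) => [/eqP Hl|Hl].
    have := EQ Hl; rewrite -/c; case=> [Hcd|Hlt].
      split => [_|]; last by rewrite Hcd eqxx.
      split => //; apply/mnmP => i.
      have := congr1 (fun x : 'X_{1..n} => x i) Hcd; rewrite /= mnmDE.
      by have := mu_gamma d i; lia.
    have Hne : c != d by apply/eqP => E; move: Hlt; rewrite E lexlt_irr.
    split; first by move=> E; rewrite E eqxx in Hne.
    by move=> _; rewrite /lt_ts Hl eqxx Hlt orbT.
  have Hlt : lexlt (lam c) (lam d).
    apply: lex_dom_neq; rewrite ?Hsz // => k Hk.
    by rewrite (Fd d Hk); apply: (Fc d s (gamma d) Hk).
  have Hne : c != d by apply/eqP => E; move: Hlt; rewrite E lexlt_irr.
  split; first by move=> E; rewrite E eqxx in Hne.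
  by move=> _; rewrite /lt_ts Hlt.
- have [i [Hi Heq Hst]] := lexlt_first (etrans (Hsz b) (esym (Hsz (gamma d)))) Hpr.
  rewrite Hsz in Hi.
  have Hlt : lexlt (lam c) (lam d).
    apply: (@lex_dom_strict _ _ i); rewrite ?Hsz //.
      move=> k Hk; have Hkn : k <= n by apply: leq_trans Hk (ltnW Hi).
      by rewrite (Fd d Hkn) -Heq //; apply: (Fc d s b Hkn).
    rewrite (Fd d Hi); apply: leq_ltn_trans (Fc d s b Hi) _.
    by rewrite ltn_add2l.
  have Hne : c != d by apply/eqP => E; move: Hlt; rewrite E lexlt_irr.
  split; first by move=> E; rewrite E eqxx in Hne.
  by move=> _; rewrite /lt_ts Hlt.
Qed.

End I.

Unset Implicit Arguments.
Import GRing.Theory.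
Local Open Scope ring_scope.

Lemma coefM (n : nat) (m : 'X_{1..n}) (p : {mpoly int[n]}) e :
  ('X_[m] * p)@_e = \sum_(b <- msupp p) p@_b * ((m + b)%MM == e)%:R.
Proof.
rewrite {1}(mpolyE p) mulr_sumr raddf_sum; apply: eq_bigr => b _.
rewrite -scalerAr; have := mcoeffZ (p@_b) ('X_[m] * 'X_[b]) e; rewrite /= => ->.
by rewrite -mpolyXD mcoeffX.
Qed.

Lemma coef_prod (n : nat) (m : 'X_{1..n}) (p : {mpoly int[n]}) e :
  (msymm m * p)@_e = \sum_(o <- undup [seq mperm s m | s : 'S_n])
     \sum_(b <- msupp p) p@_b * ((o + b)%MM == e)%:R.
Proof.
by rewrite /msymm mulr_suml raddf_sum; apply: eq_bigr => o _; exact: coefM.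
Qed.

Theorem lemma4p3 (n : nat) (d : 'X_{1..n}) (p : {mpoly int[n]}) :
  p@_(gamma d) = 1%R ->
  (forall b : 'X_{1..n}, b \in msupp p -> b != gamma d -> prec b (gamma d)) ->
  (msymm (mu d) * p)@_d = 1%R /\
  (forall e : 'X_{1..n}, e \in msupp (msymm (mu d) * p) -> e != d -> lt_ts e d).
Proof.
move=> Hg Hsupp.
set U := undup [seq mperm s (mu d) | s : 'S_n].
have HU : forall o, o \in U -> exists s, o = mperm s (mu d).
  move=> o; rewrite mem_undup => /mapP [s _ ->]; by exists s.
have Hb : forall b, b \in msupp p -> b = gamma d \/ prec b (gamma d).
  move=> b Hb; case: (boolP (b == gamma d)) => [/eqP|]; [by left|by move/(Hsupp b Hb); right].
split.
- rewrite coef_prod -/U.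
  have HmuU : mu d \in U.
    rewrite mem_undup; apply/mapP; exists 1%g; first by rewrite mem_enum.
    by apply/mnmP => i; rewrite [RHS]mnmE perm1.
  have HgS : gamma d \in msupp p by rewrite mcoeff_msupp Hg oner_eq0.
  have Hmg : (mu d + gamma d)%MM = d by apply/mnmP => i; rewrite mnmDE mu_gamma.
  rewrite (bigD1_seq _ HmuU (undup_uniq _)) /= (bigD1_seq _ HgS (msupp_uniq _)) /= Hmg eqxx Hg.
  rewrite big1_seq ?addr0; last first.
    move=> b /andP[Hne Hbs]; case: (boolP ((mu d + b)%MM == d)) => [/eqP E|]; last by rewrite mulr0.
    have := (CM 1%g (Hb b Hbs)).1; have -> : mperm 1 (mu d) = mu d by apply/mnmP => i; rewrite [LHS]mnmE perm1.
    by move=> /(_ E) [_ E']; rewrite E' eqxx in Hne.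
  rewrite big1_seq ?addr0 ?mulr1 //.
  move=> o /andP[Hne Ho]; apply: big1_seq => b Hbs.
  case: (boolP ((o + b)%MM == d)) => [/eqP E|]; last by rewrite mulr0.
  have [s Es] := HU o Ho; subst o.
  by have [E1 _] := (CM s (Hb b Hbs)).1 E; rewrite E1 eqxx in Hne.
- move=> e He Hne.
  move: He; rewrite mcoeff_msupp coef_prod -/U.
  case: (boolP (has (fun o => has (fun b => (o + b)%MM == e) (msupp p)) U)).
    move=> /hasP [o Ho /hasP [b Hbs /eqP E]] _.
    have [s Es] := HU o Ho; subst o e.
    by apply: (CM s (Hb b Hbs)).2.
  move=> Hno; rewrite big1_seq ?eqxx // => o /andP[_ Ho]; apply: big1_seq => b /andP[_ Hbs].
  case: (boolP ((o + b)%MM == e)) => [E|]; last by rewrite mulr0.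
  exfalso; move/negP: Hno; apply; apply/hasP; exists o => //; apply/hasP; exists b => //.
Qed.
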